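(* Let $M=(S,\Sigma,\delta,s_0,F)$ be a deterministic finite automaton, let $T\ge 1$ be an integer, and for each $s\in S$ let $P(\cdot\mid s)$ and $Q(\cdot\mid s)$ be probability distributions on $\Sigma$. Define probability distributions $P$ and $Q$ on $\Sigma^T$ by $P(x)=\prod_{t=1}^T P(\sigma_t\mid s_t)$ and $Q(x)=\prod_{t=1}^T Q(\sigma_t\mid s_t)$ for $x=\sigma_1\cdots\sigma_T$, where $s_1\cdots s_{T+1}$ is the state sequence induced by $x$. Let $\epsilon=\max_{s\in S}\mathrm{TV}(P(\sigma\mid s),Q(\sigma\mid s))$. Then $$\mathrm{TV}(P(x),Q(x))\le 2T|S|^{T+1}\epsilon.$$
   Context: A deterministic finite automaton $M=(S,\Sigma,\delta,s_0,F)$ has a finite state set $S$, a finite alphabet $\Sigma$, a transition function $\delta:S\times\Sigma\to S$, an initial state $s_0\in S$ and a set of final states $F\subseteq S$. For a string $x=\sigma_1\cdots\sigma_T\in\Sigma^T$, the induced state sequence $s_1\cdots s_{T+1}$ is given by $s_1=s_0$ and $s_{t+1}=\delta(s_t,\sigma_t)$ for $1\le t\le T$. The total variation distance between discrete distributions is defined without the factor $1/2$: $\mathrm{TV}(\mu,\nu)=\sum_a|\mu(a)-\nu(a)|$. *)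

(* Defs.v *)
From HB Require Import structures.
From mathcomp Require Import all_boot all_order all_algebra.
Set Implicit Arguments. Unset Strict Implicit. Unset Printing Implicit Defensive.
Import Order.TTheory GRing.Theory Num.Theory.
Local Open Scope ring_scope.

Record DFA (S Sigma : finType) := mkDFA {
  dfa_delta : S -> Sigma -> S;
  dfa_init  : S;
  dfa_final : {set S} }.

(* State s_{t+1} (1-indexed in the paper), i.e. the state reached after
   reading the first t letters of x (t is 0-indexed here). *)
Definition state_at (S Sigma : finType) (M : DFA S Sigma) (x : seq Sigma)
  (t : nat) : S := foldl (dfa_delta M) (dfa_init M) (take t x).

Definition is_distr (R : numDomainType) (A : finType) (p : A -> R) : Prop :=
  (forall a, 0 <= p a) /\ \sum_(a : A) p a = 1.

(* TV without the factor 1/2. *)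
Definition TV (R : numDomainType) (A : finType) (p q : A -> R) : R :=
  \sum_(a : A) `|p a - q a|.

Definition string_prob (R : numDomainType) (S Sigma : finType)
  (M : DFA S Sigma) (T : nat) (P : S -> Sigma -> R) (x : T.-tuple Sigma) : R :=
  \prod_(t < T) P (state_at M x t) (tnth x t).

(* Main.v *)
Require Import Defs.
From HB Require Import structures.
From mathcomp Require Import all_boot all_order all_algebra.
Import Order.TTheory GRing.Theory Num.Theory.
Local Open Scope ring_scope.

Set Implicit Arguments.
Section Aux.
Variables (R : realFieldType) (S Sigma : finType) (d : S -> Sigma -> S).

Definition sp (n : nat) (s : S) (P : S -> Sigma -> R) (x : n.-tuple Sigma) : R :=
  \prod_(t < n) P (foldl d s (take t x)) (tnth x t).

Lemma sp_cons n s P a (x : n.-tuple Sigma) :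
  sp s P [tuple of a :: x] = P s a * sp (d s a) P x.
Proof.
rewrite /sp big_ord_recl /=; congr (_ * _).
apply: eq_bigr => i _.
by rewrite /bump /= add0n !(tnth_nth a) /= add0n.
Qed.

Lemma sum_tupleS n (F : n.+1.-tuple Sigma -> R) :
  \sum_(x : n.+1.-tuple Sigma) F x =
  \sum_(a : Sigma) \sum_(x : n.-tuple Sigma) F [tuple of a :: x].
Proof.
rewrite pair_big /=.
rewrite (reindex (fun p : Sigma * n.-tuple Sigma => [tuple of p.1 :: p.2])) //=.
exists (fun x : n.+1.-tuple Sigma => (thead x, [tuple of behead x])).
  by move=> [a x] _ /=; congr pair; apply: val_inj.
move=> x _; apply: val_inj => /=.
by case: x => [[|b l] //] /=.
Qed.

Lemma sp_ge0 n s P (x : n.-tuple Sigma) :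
  (forall s, is_distr (P s)) -> 0 <= sp s P x.
Proof. move=> hP; rewrite /sp; apply: prodr_ge0 => i _.
by have [h _] := hP (foldl d s (take i x)); apply: h. Qed.

Lemma sp_sum n P : (forall s, is_distr (P s)) ->
  forall s, \sum_(x : n.-tuple Sigma) sp s P x = 1.
Proof.
move=> hP; elim: n => [|n IH] s.
  under eq_bigr => x _ do rewrite /sp big_ord0.
  by rewrite sumr_const card_tuple expn0.
rewrite sum_tupleS.
under eq_bigr => a _ do under eq_bigr => x _ do rewrite sp_cons.
under eq_bigr => a _ do rewrite -mulr_sumr IH mulr1.
by case: (hP s).
Qed.

Lemma sp_tv n P Q (e : R) : (forall s, is_distr (P s)) -> (forall s, is_distr (Q s)) ->
  (forall s, TV (P s) (Q s) <= e) ->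
  forall s, \sum_(x : n.-tuple Sigma) `|sp s P x - sp s Q x| <= n%:R * e.
Proof.
move=> hP hQ he; elim: n => [|n IH] s.
  rewrite mul0r big1 // => x; rewrite /sp !big_ord0 subrr normr0 //.
rewrite sum_tupleS.
under eq_bigr => a _ do under eq_bigr => x _ do rewrite !sp_cons.
apply: (le_trans (y := \sum_a (`|P s a - Q s a| * 1 + Q s a * (n%:R * e)))).
  apply: ler_sum => a _.
  apply: (le_trans (y := \sum_x (`|P s a - Q s a| * sp (d s a) P x
        + Q s a * `|sp (d s a) P x - sp (d s a) Q x|))).
    apply: ler_sum => x _.
    have -> : P s a * sp (d s a) P x - Q s a * sp (d s a) Q x =
      (P s a - Q s a) * sp (d s a) P x + Q s a * (sp (d s a) P x - sp (d s a) Q x).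
      by rewrite mulrBl mulrBr addrA subrK.
    apply: (le_trans (ler_normD _ _)).
    rewrite !normrM (ger0_norm (sp_ge0 _ _ _ hP)).
    by case: (hQ s) => h _; rewrite (ger0_norm (h a)).
  rewrite big_split /= -!mulr_sumr (@sp_sum n P hP) lerD2l.
  by apply: ler_wpM2l; [case: (hQ s) | apply: IH].
rewrite big_split /= -big_distrl /= mulr1.
rewrite -mulr_suml; case: (hQ s) => _ ->; rewrite mul1r mulrSr mulrDl mul1r addrC lerD2l.
exact: he.
Qed.

End Aux.
Unset Implicit Arguments.

Theorem lemma4p2 (R : realFieldType) (S Sigma : finType) (M : DFA S Sigma)
  (T : nat) (P Q : S -> Sigma -> R) :
  (1 <= T)%N ->
  (forall s, is_distr (P s)) ->
  (forall s, is_distr (Q s)) ->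
  TV (@string_prob R S Sigma M T P) (@string_prob R S Sigma M T Q)
    <= 2 * T%:R * (#|S|%:R) ^+ T.+1 * \big[Num.max/0]_(s : S) TV (P s) (Q s).
Proof.
move=> hT hP hQ.
set e := \big[Num.max/0]_(s : S) TV (P s) (Q s).
have he : forall s, TV (P s) (Q s) <= e by move=> s; apply: le_bigmax.
have e0 : 0 <= e.
  apply: le_trans (he (dfa_init M)).
  by apply: sumr_ge0 => a _.
have h := sp_tv S (dfa_delta M) T P Q e hP hQ he (dfa_init M).
apply: (le_trans h).
have S1 : (1 <= #|S|)%N by apply/card_gt0P; exists (dfa_init M).
have c1 : 1 <= (#|S|%:R : R) ^+ T.+1 by apply: exprn_ege1; rewrite ler1n.
rewrite ler_wpM2r //.
rewrite -[X in X <= _]mulr1 ler_pM // ?mulr_ge0 //.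
by rewrite -[X in X <= _]mul1r ler_wpM2r // ler1n.
Qed.
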